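(* If $u,v$ are distinct terms in $T_1^\circ$, then in $B_\bullet$ the element $u(1)^{-1}v(1)$ does not belong to the image $\mathrm{Im}\,\partial$ of $\partial$.
   Context: $T_1^\circ$ is the set of terms in a single variable $x$ built with a binary operator $\circ$. The group $B_\bullet$ is generated by $\sigma_1,\sigma_2,\dots$ and $a_1,a_2,\dots$ subject to: $\sigma_j\sigma_i=\sigma_i\sigma_j$ and $a_j\sigma_i=\sigma_ia_j$ for $j\ge i+2$; $a_j\sigma_i=\sigma_{i+1}a_j$ and $a_ja_i=a_{i+1}a_j$ for $j\le i-1$; $\sigma_j\sigma_i\sigma_j=\sigma_i\sigma_j\sigma_i$, $\sigma_i\sigma_ja_i=a_j\sigma_i$ and $\sigma_j\sigma_ia_j=a_i\sigma_i$ for $j=i+1$. $\partial$ is the endomorphism of $B_\bullet$ with $\partial\sigma_i=\sigma_{i+1}$, $\partial a_i=a_{i+1}$. The operation $\circ$ on $B_\bullet$ is $\beta\circ\gamma=\beta\cdot\partial\gamma\cdot a_1$, and for $v\in T_1^\circ$, $v(1)$ is its evaluation at the identity $1$: $x(1)=1$ and $(v_1\circ v_2)(1)=v_1(1)\cdot\partial v_2(1)\cdot a_1$. *)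

(* Defs.v *)
(* The group B_bullet is given by the presentation in the paper;
   we realise it as words in the generators and their inverses modulo the
   congruence generated by free cancellation and the defining relations. *)
From Stdlib Require Import List Arith.
Import ListNotations.

(* Generators, 0-based: [Sig i] is sigma_{i+1}, [Agen i] is a_{i+1}. *)
Inductive gen : Type := Sig (i : nat) | Agen (i : nat).

(* A letter: a generator and a flag [true] meaning its inverse. *)
Definition letter : Type := (gen * bool)%type.
Definition word : Type := list letter.

Definition s (i : nat) : word := [(Sig i, false)].
Definition a (i : nat) : word := [(Agen i, false)].

(* Defining relations lhs = rhs of B_bullet (indices shifted by one,
   which does not affect the relations as they only involve differences). *)
Inductive defrel : word -> word -> Prop :=
| R_ss_far  : forall i j, i + 2 <= j -> defrel (s j ++ s i) (s i ++ s j)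
| R_as_far  : forall i j, i + 2 <= j -> defrel (a j ++ s i) (s i ++ a j)
| R_as_near : forall i j, j + 1 <= i -> defrel (a j ++ s i) (s (S i) ++ a j)
| R_aa_near : forall i j, j + 1 <= i -> defrel (a j ++ a i) (a (S i) ++ a j)
| R_braid   : forall i, defrel (s (S i) ++ s i ++ s (S i)) (s i ++ s (S i) ++ s i)
| R_ssa1    : forall i, defrel (s i ++ s (S i) ++ a i) (a (S i) ++ s i)
| R_ssa2    : forall i, defrel (s (S i) ++ s i ++ a (S i)) (a i ++ s i).

Inductive basic : word -> word -> Prop :=
| B_cancel : forall g b, basic [(g, b); (g, negb b)] []
| B_rel : forall x y, defrel x y -> basic x y.

Inductive weq : word -> word -> Prop :=
| weq_refl  : forall w, weq w w
| weq_sym   : forall w1 w2, weq w1 w2 -> weq w2 w1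
| weq_trans : forall w1 w2 w3, weq w1 w2 -> weq w2 w3 -> weq w1 w3
| weq_step  : forall l r x y, basic x y -> weq (l ++ x ++ r) (l ++ y ++ r).

Definition inv_letter (x : letter) : letter := (fst x, negb (snd x)).
Definition winv (w : word) : word := rev (map inv_letter w).

Definition shift_gen (g : gen) : gen :=
  match g with Sig i => Sig (S i) | Agen i => Agen (S i) end.
Definition partial (w : word) : word :=
  map (fun x => (shift_gen (fst x), snd x)) w.

Inductive term : Type := X | Op (t1 t2 : term).

Fixpoint eval1 (t : term) : word :=
  match t with
  | X => []
  | Op t1 t2 => eval1 t1 ++ partial (eval1 t2) ++ a 0
  end.

(* Main.v *)
Require Import Defs.
From Stdlib Require Import List.
From Stdlib Require Import Arith Lia Cantor FunctionalExtensionality.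
Import ListNotations.

Definition pr (a b : nat) : nat := Cantor.to_nat (a, b).
Definition up (z : nat) : nat * nat := Cantor.of_nat z.

Definition swp (i : nat) (x : nat -> nat) : nat -> nat :=
  fun n => if n =? i then x (S i) else if n =? S i then x i else x n.
Definition mrg (i : nat) (x : nat -> nat) : nat -> nat :=
  fun n => if n <? i then x n else if n =? i then pr (x i) (x (S i)) else x (S n).
Definition spl (i : nat) (x : nat -> nat) : nat -> nat :=
  fun n => if n <? i then x n else if n =? i then fst (up (x i))
           else if n =? S i then snd (up (x i)) else x (n - 1).

Definition actl (l : letter) (x : nat -> nat) : nat -> nat :=
  match l with
  | (Sig i, _) => swp i x
  | (Agen i, false) => mrg i x
  | (Agen i, true) => spl i x
  end.

Fixpoint act (w : word) (x : nat -> nat) : nat -> nat :=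
  match w with
  | [] => x
  | l :: w' => act w' (actl l x)
  end.

Lemma act_app w1 w2 x : act (w1 ++ w2) x = act w2 (act w1 x).
Proof. revert x; induction w1; simpl; auto. Qed.

Lemma up_pr a b : up (pr a b) = (a, b).
Proof. apply Cantor.cancel_of_to. Qed.
Lemma pr_up z : pr (fst (up z)) (snd (up z)) = z.
Proof. unfold pr, up. rewrite <- surjective_pairing. apply Cantor.cancel_to_of. Qed.

Ltac crush :=
  repeat match goal with
  | |- context [?a =? ?b] => destruct (Nat.eqb_spec a b)
  | |- context [?a <? ?b] => destruct (Nat.ltb_spec a b)
  end; subst; try lia; try reflexivity.

Lemma actl_inv l x : actl (inv_letter l) (actl l x) = x.
Proof.
  destruct l as [[i|i] [|]]; simpl; apply functional_extensionality; intro n;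
  unfold swp, mrg, spl.
  - crush.
  - crush.
  - crush; try (f_equal; lia).
    + rewrite pr_up. reflexivity.
  - crush; rewrite ?up_pr; simpl; try reflexivity; f_equal; lia.
Qed.

Lemma act_winv w x : act (winv w) (act w x) = x.
Proof.
  revert x; induction w as [|l w IH]; intro x; simpl; auto.
  unfold winv in *. simpl. rewrite act_app. rewrite IH. simpl. apply actl_inv.
Qed.

Lemma basic_ok x y : basic x y -> forall z, act x z = act y z.
Proof.
  intros H z. destruct H as [g b|x y H].
  - destruct g as [i|i]; destruct b; simpl; apply functional_extensionality; intro n;
    unfold swp, mrg, spl; crush; rewrite ?up_pr, ?pr_up; simpl; try reflexivity; f_equal; lia.
  - destruct H; simpl; apply functional_extensionality; intro n;
    unfold swp, mrg; crush; try (f_equal; lia).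
Qed.

Lemma weq_ok w1 w2 : weq w1 w2 -> forall z, act w1 z = act w2 z.
Proof.
  induction 1; intros z.
  - reflexivity.
  - symmetry; auto.
  - etransitivity; eauto.
  - rewrite !act_app. rewrite (basic_ok x y H). reflexivity.
Qed.

Definition sh (y : nat -> nat) : nat -> nat := fun k => y (S k).

Lemma actl_shift l y :
  actl (shift_gen (fst l), snd l) y =
  fun n => if n =? 0 then y 0 else actl l (sh y) (n - 1).
Proof.
  apply functional_extensionality; intro n.
  destruct l as [[i|i] [|]]; simpl; unfold swp, mrg, spl, sh; crush; f_equal; lia.
Qed.

Lemma act_partial w y :
  act (partial w) y = fun n => if n =? 0 then y 0 else act w (sh y) (n - 1).
Proof.
  revert y; induction w as [|l w IH]; intro y; simpl.
  - apply functional_extensionality; intro n; unfold sh; crush; f_equal; lia.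
  - change (act (partial w) (actl (shift_gen (fst l), snd l) y) = fun n => if n =? 0 then y 0 else act w (actl l (sh y)) (n - 1)).
    rewrite (actl_shift l y). rewrite IH. apply functional_extensionality; intro n.
    destruct (n =? 0); [reflexivity|]. f_equal. f_equal.
    apply functional_extensionality; intro k. unfold sh. simpl.
    f_equal. lia.
Qed.

Fixpoint leaves (t : term) : nat :=
  match t with X => 1 | Op t1 t2 => leaves t1 + leaves t2 end.

Fixpoint evalp (t : term) (y : nat -> nat) : nat :=
  match t with
  | X => y 0
  | Op t1 t2 => pr (evalp t1 y) (evalp t2 (fun k => y (k + leaves t1)))
  end.

Lemma leaves_pos t : 1 <= leaves t.
Proof. induction t; simpl; lia. Qed.

Lemma act_eval t y :
  act (eval1 t) y = fun n => if n =? 0 then evalp t y else y (n + leaves t - 1).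
Proof.
  revert y; induction t as [|t1 IH1 t2 IH2]; intro y; simpl.
  - apply functional_extensionality; intro n; crush; f_equal; lia.
  - rewrite !act_app, IH1, act_partial.
    assert (E : sh (fun n : nat => if n =? 0 then evalp t1 y else y (n + leaves t1 - 1))
                = fun k => y (k + leaves t1)).
    { apply functional_extensionality; intro k; unfold sh. simpl. f_equal.
      pose proof (leaves_pos t1); lia. }
    rewrite E, IH2. simpl. apply functional_extensionality; intro n. unfold mrg.
    pose proof (leaves_pos t1); pose proof (leaves_pos t2).
    crush; f_equal; lia.
Qed.

Definition e (t : term) : nat := evalp t (fun _ => 1).

Lemma e_op t1 t2 : e (Op t1 t2) = pr (e t1) (e t2).
Proof. reflexivity. Qed.

Lemma e_ge1 t : 1 <= e t.
Proof.
  induction t; [unfold e; simpl; lia|].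
  rewrite e_op. unfold pr. pose proof (Cantor.to_nat_non_decreasing (e t1) (e t2)). lia.
Qed.

Lemma e_inj t1 t2 : e t1 = e t2 -> t1 = t2.
Proof.
  revert t2; induction t1 as [|a1 IHa b1 IHb]; intros [|a2 b2] H.
  - reflexivity.
  - exfalso. rewrite e_op in H. unfold pr in H.
    pose proof (Cantor.to_nat_non_decreasing (e a2) (e b2)).
    pose proof (e_ge1 a2); pose proof (e_ge1 b2). change (e X) with 1 in H. lia.
  - exfalso. rewrite e_op in H. unfold pr in H.
    pose proof (Cantor.to_nat_non_decreasing (e a1) (e b1)).
    pose proof (e_ge1 a1); pose proof (e_ge1 b1). change (e X) with 1 in H. lia.
  - rewrite !e_op in H. unfold pr in H. apply Cantor.to_nat_inj in H.
    injection H as H1 H2. f_equal; auto.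
Qed.

Theorem lemma2p9 (u v : term) :
  u <> v ->
  ~ (exists w : word, weq (partial w) (winv (eval1 u) ++ eval1 v)).
Proof.
  intros Huv [w Hw].
  pose (y := fun _ : nat => 1).
  pose proof (weq_ok _ _ Hw (act (eval1 u) y)) as H.
  rewrite act_app, act_winv, act_partial in H.
  apply (f_equal (fun f => f 0)) in H. simpl in H.
  rewrite !act_eval in H. simpl in H.
  apply Huv, e_inj. exact H.
Qed.
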